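(* Let $G=(V,E)$ be a finite graph, $\varepsilon$ an orientation, $q$ a positive integer, and let $\rho,\sigma,\omega$ be Eulerian equivalent totally cyclic orientations of $G$. Let $f\in q\Delta^\rho_{\mathrm{FL}}(G,\varepsilon)$. Then: (a) $\varepsilon_f=\rho$; (b) $P_{\varepsilon,\sigma}Q_{\sigma,\rho}P_{\rho,\varepsilon}\big(q\Delta^\rho_{\mathrm{FL}}(G,\varepsilon)\big)=q\Delta^\sigma_{\mathrm{FL}}(G,\varepsilon)$; (c) $P_{\varepsilon,\sigma}Q_{\sigma,\rho}P_{\rho,\varepsilon}f=P_{\varepsilon,\omega}Q_{\omega,\rho}P_{\rho,\varepsilon}f$ if and only if $\sigma=\omega$; (d) $F(G,\varepsilon;q)\cap\mathrm{Mod}_q^{-1}(\mathrm{Mod}_qf)=\{P_{\varepsilon,\alpha}Q_{\alpha,\rho}P_{\rho,\varepsilon}f:\ \alpha\in\mathcal O(G),\ \alpha\sim\rho\}$.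
   Context: An orientation assigns each edge (including loops) one of its two directions; $\varepsilon(v,e)=1$ ($-1$) if non-loop $e$ points out of (into) end-vertex $v$, $0$ otherwise. $F(G,\varepsilon;\mathbb R)$: real flows $f:E\to\mathbb R$ with $\sum_e m_{v,e}f(e)=0$ for all $v$, $m_{v,e}=\varepsilon(v,e)$ for non-loops, $0$ for loops; $F(G,\varepsilon;q)=\{f\in F(G,\varepsilon;\mathbb R):|f(e)|<q\ \forall e\}$. $[\rho,\varepsilon](e)=1$ if $\rho,\varepsilon$ give $e$ the same direction, $-1$ otherwise; $P_{\rho,\varepsilon}:\mathbb R^E\to\mathbb R^E$, $P_{\rho,\varepsilon}f=[\rho,\varepsilon]f$. $Q_{\sigma,\rho}:[0,q]^E\to[0,q]^E$, $(Q_{\sigma,\rho}g)(e)=g(e)$ if $\sigma,\rho$ agree on $e$ and $q-g(e)$ otherwise. $q\Delta^\rho_{\mathrm{FL}}(G,\varepsilon)=\{f\in F(G,\varepsilon;\mathbb R):0<[\rho,\varepsilon](e)f(e)<q\ \forall e\}$. For $f:E\to\mathbb R$, $\varepsilon_f$ agrees with $\varepsilon$ on edges with $f(e)>0$ and is opposite on edges with $f(e)\le0$. $\mathrm{Mod}_q:\mathbb R^E\to(\mathbb R/q\mathbb Z)^E$ reduces each coordinate mod $q$. Orientations are Eulerian equivalent ($\sim$) if the spanning subgraph formed by the edges on which they differ is directed Eulerian (in-degree = out-degree at every vertex) with respect to either of them. A cut $[S,S^c]$ (nonempty set of all edges between a nonempty proper vertex set and its complement) is directed if all its edges point the same way across it;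 totally cyclic means no directed cut. *)

(* Defs.v *)
From HB Require Import structures.
From mathcomp Require Import all_boot all_order all_algebra.
From mathcomp Require Import reals.
Set Implicit Arguments. Unset Strict Implicit. Unset Printing Implicit Defensive.
Import Order.TTheory GRing.Theory Num.Theory.
Local Open Scope ring_scope.

(* A finite graph (loops and multiple edges allowed) is given by finite types
   V (vertices) and E (edges) and two end maps [t h : E -> V]; the pair
   (t e, h e) fixes a reference direction "t e -> h e" of e.  An orientation
   is a map [o : E -> bool]: [o e = true] means e is directed t e -> h e,
   [o e = false] means h e -> t e.  (For a loop both values are the two
   formal directions of the loop.) *)

Definition otail (V E : finType) (t h : E -> V) (o : E -> bool) (e : E) : V :=
  if o e then t e else h e.
Definition ohead (V E : finType) (t h : E -> V) (o : E -> bool) (e : E) : V :=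
  if o e then h e else t e.

Definition inc (R : realType) (V E : finType) (t h : E -> V) (o : E -> bool)
    (v : V) (e : E) : R :=
  if t e == h e then 0
  else if otail t h o e == v then 1
  else if ohead t h o e == v then -1 else 0.

Definition is_flow (R : realType) (V E : finType) (t h : E -> V)
    (eps : E -> bool) (f : E -> R) : Prop :=
  forall v : V, \sum_(e : E) inc R t h eps v e * f e = 0.

Definition qflow (R : realType) (V E : finType) (t h : E -> V)
    (eps : E -> bool) (q : nat) (f : E -> R) : Prop :=
  is_flow t h eps f /\ forall e, `|f e| < q%:R.

Definition osign (R : realType) (E : finType) (rho eps : E -> bool) (e : E) : R :=
  if rho e == eps e then 1 else -1.

Definition Pmap (R : realType) (E : finType) (rho eps : E -> bool)
    (f : E -> R) : E -> R :=
  fun e => osign R rho eps e * f e.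

(* Q_{sigma,rho} (only ever applied to functions with values in [0,q]) *)
Definition Qmap (R : realType) (E : finType) (q : nat) (sigma rho : E -> bool)
    (g : E -> R) : E -> R :=
  fun e => if sigma e == rho e then g e else q%:R - g e.

Definition DeltaFL (R : realType) (V E : finType) (t h : E -> V)
    (q : nat) (rho eps : E -> bool) (f : E -> R) : Prop :=
  is_flow t h eps f /\
  forall e, 0 < osign R rho eps e * f e /\ osign R rho eps e * f e < q%:R.

Definition orient_of (R : realType) (E : finType) (eps : E -> bool)
    (f : E -> R) : E -> bool :=
  fun e => if 0 < f e then eps e else ~~ eps e.

(* Mod_q g = Mod_q f in (R/qZ)^E, i.e. coordinatewise congruence mod qZ *)
Definition modq_eq (R : realType) (E : finType) (q : nat) (f g : E -> R) : Prop :=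
  forall e, exists k : int, g e - f e = k%:~R * q%:R.

Definition eulerian_equiv (V E : finType) (t h : E -> V) (o1 o2 : E -> bool) : Prop :=
  forall v : V,
    #|[set e : E | (o1 e != o2 e) && (otail t h o1 e == v)]| =
    #|[set e : E | (o1 e != o2 e) && (ohead t h o1 e == v)]|.

Definition in_cut (V E : finType) (t h : E -> V) (S : {set V}) (e : E) : bool :=
  (t e \in S) != (h e \in S).

Definition directed_cut (V E : finType) (t h : E -> V) (o : E -> bool)
    (S : {set V}) : Prop :=
  [/\ S != set0, S != setT, (exists e, in_cut t h S e) &
      ((forall e, in_cut t h S e -> otail t h o e \in S) \/
       (forall e, in_cut t h S e -> otail t h o e \notin S))].

Definition totally_cyclic (V E : finType) (t h : E -> V) (o : E -> bool) : Prop :=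
  ~ exists S : {set V}, directed_cut t h o S.

(* Main.v *)
Require Import Defs.
From HB Require Import structures.
From mathcomp Require Import all_boot all_order all_algebra.
From mathcomp Require Import reals ring lra zify.
From Stdlib Require Import FunctionalExtensionality.
Import Order.TTheory GRing.Theory Num.Theory.
Local Open Scope ring_scope.

Lemma inc_osign (R : realType) (V E : finType) (t h : E -> V) (a b : E -> bool) v e :
  inc R t h b v e * osign R a b e = inc R t h a v e.
Proof.
unfold inc, otail, Defs.ohead, osign.
case: (t e =P h e) => [_|ne]; first by rewrite mul0r.
case: (a e); case: (b e) => /=; rewrite ?mulr1 ?mulrN1;
case: (t e =P v) => tv; case: (h e =P v) => hv; rewrite /= ?opprK ?oppr0 //;
exfalso; apply: ne; by rewrite tv hv.
Qed.

Lemma sum_eul (R : realType) (V E : finType) (t h : E -> V) (a b : E -> bool) v :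
  \sum_e (if a e != b e then inc R t h a v e else 0) =
  #|[set e | (a e != b e) && (otail t h a e == v)]|%:R -
  #|[set e | (a e != b e) && (Defs.ohead t h a e == v)]|%:R.
Proof.
rewrite -!sum1_card !natr_sum. rewrite [X in _ = X - _]big_mkcond [X in _ = _ - X]big_mkcond -sumrB.
apply: eq_bigr => e _; rewrite !inE.
unfold inc, otail, Defs.ohead.
case: (a e != b e); rewrite /= ?subrr //.
case: (t e =P h e) => [->|ne]; first by case: (a e); rewrite subrr.
case: (a e) => /=;
case: (t e =P v) => tv; case: (h e =P v) => hv; rewrite /= ?subr0 ?sub0r //;
exfalso; apply: ne; by rewrite tv hv.
Qed.

Lemma eul_sum (R : realType) (V E : finType) (t h : E -> V) (a b : E -> bool) :
  eulerian_equiv t h a b <->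
  forall v, \sum_e (if a e != b e then inc R t h a v e else 0) = 0.
Proof.
split => H v; move: (H v); rewrite sum_eul.
  by move=> ->; rewrite subrr.
by move/eqP; rewrite subr_eq0 eqr_nat => /eqP.
Qed.

Lemma eul_sym (V E : finType) (t h : E -> V) (a b : E -> bool) :
  eulerian_equiv t h a b -> eulerian_equiv t h b a.
Proof.
move=> H v.
have E1 : [set e | (b e != a e) && (otail t h b e == v)] =
          [set e | (a e != b e) && (Defs.ohead t h a e == v)].
  by apply/setP => e; rewrite !inE /otail /Defs.ohead; case: (a e); case: (b e).
have E2 : [set e | (b e != a e) && (Defs.ohead t h b e == v)] =
          [set e | (a e != b e) && (otail t h a e == v)].
  by apply/setP => e; rewrite !inE /otail /Defs.ohead; case: (a e); case: (b e).
by rewrite E1 E2 H.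
Qed.

Definition cfun (R : realType) {E : finType} (q : nat) (a b eps : E -> bool) (e : E) : R :=
  if a e != b e then osign R a eps e * q%:R else 0.

Lemma flow_c (R : realType) (V E : finType) (t h : E -> V) (q : nat) (a b eps : E -> bool) :
  (0 < q)%N ->
  (is_flow t h eps (cfun R q a b eps) <-> eulerian_equiv t h a b).
Proof.
move=> q0.
have E1 : forall v, \sum_e inc R t h eps v e * cfun R q a b eps e =
   (\sum_e (if a e != b e then inc R t h a v e else 0)) * q%:R.
  move=> v; rewrite mulr_suml; apply: eq_bigr => e _.
  rewrite /cfun; case: (a e != b e); last by rewrite mulr0 mul0r.
  by rewrite mulrA inc_osign.
rewrite (eul_sum R); split => H v; move: (H v); rewrite E1.
  by move/eqP; rewrite mulf_eq0 pnatr_eq0 -[q == 0%N]negbK -lt0n q0 orbF => /eqP.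
by move=> ->; rewrite mul0r.
Qed.

Lemma flow_add (R : realType) (V E : finType) (t h : E -> V) (eps : E -> bool) (f c : E -> R) :
  is_flow t h eps f ->
  (is_flow t h eps (fun e => f e + c e) <-> is_flow t h eps c).
Proof.
move=> Hf.
have S : forall v, \sum_e inc R t h eps v e * (f e + c e) =
  \sum_e inc R t h eps v e * f e + \sum_e inc R t h eps v e * c e.
  by move=> v; rewrite -big_split /=; apply: eq_bigr => e _; rewrite mulrDr.
split => H v; move: (H v); rewrite S Hf add0r //.
Qed.

Lemma flow_sub (R : realType) (V E : finType) (t h : E -> V) (eps : E -> bool) (f c : E -> R) :
  is_flow t h eps f -> is_flow t h eps c ->
  is_flow t h eps (fun e => f e - c e).
Proof.
move=> Hf Hc v; under eq_bigr do rewrite mulrBr.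
by rewrite sumrB Hf Hc subrr.
Qed.

Lemma key (R : realType) (E : finType) (q : nat) (eps rho a : E -> bool) (f : E -> R) e :
  Pmap eps a (Qmap q a rho (Pmap rho eps f)) e = f e + cfun R q a rho eps e.
Proof.
rewrite /Pmap /Qmap /cfun /osign; case: (a e); case: (rho e); case: (eps e) => /=; ring.
Qed.

Lemma intcases (R : realType) (k : int) : (k%:~R <= -2 :> R) \/ k%:~R = -1 :> R \/ k%:~R = 0 :> R \/ k%:~R = 1 :> R \/ (2 <= k%:~R :> R).
Proof.
have : (k <= -2)%R \/ k = -1 \/ k = 0 \/ k = 1 \/ (2 <= k)%R by lia.
case=> [H|[->|[->|[->|H]]]].
- left. have := H; rewrite -(ler_int R) => H'. exact H'.
- right; left. done.
- do 2 right; left. done.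
- do 3 right; left. done.
- do 4 right. by rewrite -(ler_int R) in H.
Qed.

Theorem lemma5p4 (R : realType) (V E : finType) (t h : E -> V)
    (eps : E -> bool) (q : nat) (rho sigma omega : E -> bool) (f : E -> R) :
  (0 < q)%N ->
  totally_cyclic t h rho -> totally_cyclic t h sigma -> totally_cyclic t h omega ->
  eulerian_equiv t h rho sigma -> eulerian_equiv t h rho omega ->
  DeltaFL t h q rho eps f ->
  [/\ orient_of eps f = rho,
      (forall g : E -> R,
         DeltaFL t h q sigma eps g <->
         exists f' : E -> R, DeltaFL t h q rho eps f' /\
           g = Pmap eps sigma (Qmap q sigma rho (Pmap rho eps f'))),
      (Pmap eps sigma (Qmap q sigma rho (Pmap rho eps f)) =
         Pmap eps omega (Qmap q omega rho (Pmap rho eps f)) <-> sigma = omega) &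
      (forall g : E -> R,
         (qflow t h eps q g /\ modq_eq q f g) <->
         exists alpha : E -> bool, eulerian_equiv t h alpha rho /\
           g = Pmap eps alpha (Qmap q alpha rho (Pmap rho eps f)))].
Proof.
move=> q0 _ _ _ ers ero [Ff Fb].
have qpos : 0 < q%:R :> R by rewrite ltr0n.
have esr := eul_sym _ _ _ _ _ _ ers.
have keyf : forall (a : E -> bool) (f0 : E -> R),
   Pmap eps a (Qmap q a rho (Pmap rho eps f0)) = (fun e => f0 e + cfun R q a rho eps e).
  by move=> a f0; apply: functional_extensionality => e; rewrite key.
split.
- apply: functional_extensionality => e; rewrite /orient_of; move: (Fb e); rewrite /osign.
  case: (rho e); case: (eps e) => /= -[H1 H2]; case: ltrP => H //=; exfalso; lra.
- move=> g; split.
  + move=> [Gf Gb]; exists (fun e => g e - cfun R q sigma rho eps e); split.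
      split; first by apply: flow_sub => //; apply/flow_c.
      move=> e; move: (Gb e); rewrite /cfun /osign.
      by case: (sigma e); case: (rho e); case: (eps e) => /= -[H1 H2]; split; lra.
    by rewrite keyf; apply: functional_extensionality => e; ring.
  + move=> [f' [[F'f F'b] ->]]; rewrite keyf; split.
      by apply/flow_add => //; apply/flow_c.
    move=> e; move: (F'b e); rewrite /cfun /osign.
    by case: (sigma e); case: (rho e); case: (eps e) => /= -[H1 H2]; split; lra.
- split; last by move=> ->.
  move=> Heq; apply: functional_extensionality => e.
  move: (congr1 (fun F => F e) Heq); rewrite !key /cfun /osign.
  case: (sigma e); case: (omega e); case: (rho e); case: (eps e) => /= H; try done; exfalso; lra.
- move=> g; split.
  + move=> [[Gf Gb] Hm].
    set alpha := fun e => if g e == f e then rho e else ~~ rho e.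
    have Hg : forall e, g e = f e + cfun R q alpha rho eps e.
      move=> e; rewrite /cfun /osign /alpha /=.
      case: (g e =P f e) => [->|ne]; first by rewrite eqxx addr0.
      case: (Hm e) => k Hk; move: (Gb e) (Fb e); rewrite ltr_norml /osign.
      have := intcases R k; move: Hk; move: (k%:~R : R) => kr Hk Hc.
      move: qpos; set Q := q%:R => qpos.
      case: (rho e); case: (eps e) => /= /andP [G1 G2] [F1 F2];
      (case: Hc => [Hc|[Hc|[Hc|[Hc|Hc]]]]; try first [nra | (exfalso; apply: ne; nra)]).
    exists alpha; split.
      apply/(flow_c R V E t h q alpha rho eps) => //.
      have -> : cfun R q alpha rho eps = (fun e => g e - f e).
        by apply: functional_extensionality => e; rewrite Hg; ring.
      exact: flow_sub.
    by rewrite keyf; apply: functional_extensionality => e; rewrite Hg.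
  + move=> [alpha [Ea ->]]; rewrite keyf; split; first split.
    * by apply/flow_add => //; apply/flow_c.
    * move=> e; move: (Fb e); rewrite ltr_norml /cfun /osign.
      by case: (alpha e); case: (rho e); case: (eps e) => /= -[H1 H2]; apply/andP; split; lra.
    * move=> e; exists (if alpha e != rho e then (if alpha e == eps e then 1 else -1) else 0).
      rewrite /cfun /osign.
      case: (alpha e); case: (rho e); case: (eps e) => /=; rewrite ?mulr0z ?mulr1z ?mulrN1z; ring.
Qed.
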